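(* Let $(p_1,q_1),\ldots,(p_n,q_n)\in\mathbb{R}^2$ be a Pareto-optimal market and for $(p,q)\in\mathbb{R}^2$ let \[\operatorname{profit}(p,q)=(p-q)\cdot\bigl|\{i: p\le p_i \text{ and } q\ge q_i\}\bigr|.\] Let $q'\le q$ and let $p$ be such that $0<\operatorname{profit}(p,q)\le\operatorname{profit}(p,q')$. Then for every $p'\le p$, $\operatorname{profit}(p',q)\le\operatorname{profit}(p',q')$.
   Context: Customer $(p_i,q_i)$ considers product $(p,q)$ iff $p\le p_i$ and $q\ge q_i$. The market is Pareto-optimal: there are no two customers $i,j$ with $q_i>q_j$ and $p_i<p_j$. *)

(* Defs.v *)
From HB Require Import structures.
From mathcomp Require Import all_boot all_order all_algebra.
Set Implicit Arguments. Unset Strict Implicit. Unset Printing Implicit Defensive.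
Import Order.TTheory GRing.Theory Num.Theory.
Local Open Scope ring_scope.

Definition pareto_optimal (R : realFieldType) (n : nat) (P Q : 'I_n -> R) : Prop :=
  forall i j : 'I_n, ~ (Q j < Q i /\ P i < P j).

Definition considers (R : realFieldType) (n : nat) (P Q : 'I_n -> R)
    (p q : R) (i : 'I_n) : bool := (p <= P i) && (Q i <= q).

Definition profit (R : realFieldType) (n : nat) (P Q : 'I_n -> R) (p q : R) : R :=
  (p - q) * (#|[set i : 'I_n | considers P Q p q i]|)%:R.

(* Main.v *)
Require Import Defs.
From HB Require Import structures.
From mathcomp Require Import all_boot all_order all_algebra.
From mathcomp Require Import lra.
Import Order.TTheory GRing.Theory Num.Theory.
Local Open Scope ring_scope.

Theorem lemma2 (R : realFieldType) (n : nat) (P Q : 'I_n -> R)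
    (hpar : pareto_optimal P Q) (p q q' : R) (hqq : q' <= q)
    (hpos : 0 < profit P Q p q) (hle : profit P Q p q <= profit P Q p q') :
  forall p' : R, p' <= p -> profit P Q p' q <= profit P Q p' q'.
Proof.
move=> p' hp'.
set S := fun a b => [set i : 'I_n | considers P Q a b i].
have sub : forall a, S a q' \subset S a q.
  move=> a; apply/subsetP => i; rewrite !inE /considers => /andP[-> h] /=.
  exact: le_trans h hqq.
have split : forall a, #|S a q| = (#|S a q'| + #|S a q :\: S a q'|)%N.
  move=> a; rewrite -(cardsID (S a q') (S a q)).
  by rewrite (setIidPr (sub a)).
have hprof : forall a b, profit P Q a b = (a - b) * (#|S a b|)%:R by [].
move: hpos hle; rewrite !hprof split (split p') !natrD.
set N := (#|S p q'|)%:R; set D := (#|S p q :\: S p q'|)%:R.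
set N' := (#|S p' q'|)%:R; set D' := (#|S p' q :\: S p' q'|)%:R.
move=> hpos hle.
have N0 : 0 <= N by rewrite ler0n.
have D0 : 0 <= D by rewrite ler0n.
have D'0 : 0 <= D' by rewrite ler0n.
have hD : (p - q) * D <= (q - q') * N by nra.
have hNN : N <= N'.
  rewrite ler_nat; apply: subset_leq_card; apply/subsetP => i.
  rewrite !inE /considers => /andP[h1 ->]; by rewrite (le_trans hp' h1).
have hpq : 0 < p - q.
  case: (ltrP 0 (p - q)) => // h.
  have : (p - q) * (N + D) <= 0 by nra.
  lra.
have Npos : 0 < N.
  rewrite lt_neqAle N0 andbT; apply/eqP => hN.
  rewrite -hN in hD hpos; nra.
have hDD : D' <= D.
  rewrite ler_nat; apply: subset_leq_card; apply/subsetP => i.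
  rewrite !inE /considers => /andP[/negP hn /andP[h1 h2]].
  rewrite h1 /= in hn.
  have hq : q' < Q i by rewrite ltNge; apply/negP.
  have pi : p <= P i.
    case: (leP p (P i)) => // hlt.
    have : (0 < #|S p q'|)%N by rewrite -(ltr0n R).
    move/card_gt0P => [j]; rewrite inE /considers => /andP[hj1 hj2].
    exfalso; apply: (hpar i j); split; [exact: le_lt_trans hj2 hq | exact: lt_le_trans hlt hj1].
  by rewrite pi h2 andbT /= andbT -ltNge.
case: (leP p' q) => hp'q.
  have : (p' - q) * D' <= 0 by nra.
  nra.
nra.
Qed.
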